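(* Let $f$ be an invertible $\mathbb F_q$-linearised polynomial over $\mathbb F_{q^h}$, and take $a \in \mathbb F_{q^h}$. Then $f(a f^{-1}(X))$ is linear if and only if $f$ is $\mathbb F_q(a)$-semi-linear.
   Context: Let $q$ be a prime power and $h \geq 1$. An $\mathbb F_q$-linearised polynomial over $\mathbb F_{q^h}$ is a polynomial of the form $f(X) = \sum_{l=0}^{h-1} f_l X^{q^l}$ with coefficients $f_l \in \mathbb F_{q^h}$; it defines an $\mathbb F_q$-linear map $\mathbb F_{q^h} \to \mathbb F_{q^h}$, and it is called invertible if this map is bijective, in which case $f^{-1}$ denotes the inverse map, which is again an $\mathbb F_q$-linearised polynomial. Identities between linearised polynomials are understood as identities of functions on $\mathbb F_{q^h}$ (written $\equiv$). ''$f(a f^{-1}(X))$ is linear'' means $f(a f^{-1}(X)) \equiv bX$ for some constant $b \in \mathbb F_{q^h}$. $f$ is called $\mathbb F_q(a)$-semi-linear if there exists a field automorphism $\sigma$ of $\mathbb F_{q^h}$ such that $f(\alpha X) = \alpha^\sigma f(X)$ for all $\alpha \in \mathbb F_q(a)$ and all $X \in \mathbb F_{q^h}$. *)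

(* Defs.v *)
From HB Require Import structures.
From mathcomp Require Import all_boot all_order all_algebra.
Set Implicit Arguments. Unset Strict Implicit. Unset Printing Implicit Defensive.
Import GRing.Theory.
Local Open Scope ring_scope.

Definition prime_power (q : nat) : Prop :=
  exists p k : nat, [/\ prime p, (0 < k)%N & q = (p ^ k)%N].

Definition linpol (L : finFieldType) (q h : nat) (c : 'I_h -> L) (x : L) : L :=
  \sum_(l < h) c l * x ^+ (q ^ l)%N.

Definition is_subfield (L : fieldType) (S : L -> Prop) : Prop :=
  [/\ S 0, S 1,
      (forall x y, S x -> S y -> S (x + y)),
      (forall x, S x -> S (- x)) &
      ((forall x y, S x -> S y -> S (x * y)) /\
       (forall x, S x -> S (x^-1)))].

(* membership in F_q(a): the smallest subfield of L containing the subfield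
   F_q = {x | x^q = x} and the element a *)
Definition in_Fq_adj (L : fieldType) (q : nat) (a alpha : L) : Prop :=
  forall S : L -> Prop, is_subfield S ->
    (forall x, x ^+ q = x -> S x) -> S a -> S alpha.

Definition Fqa_semilinear (L : fieldType) (q : nat) (a : L) (f : L -> L) : Prop :=
  exists sigma : {rmorphism L -> L}, bijective sigma /\
    forall alpha x, in_Fq_adj q a alpha -> f (alpha * x) = sigma alpha * f x.

(* Main.v *)
Require Import Defs.
From HB Require Import structures.
From mathcomp Require Import all_boot all_order all_algebra.
From mathcomp Require Import finfield ring.
Set Implicit Arguments. Unset Strict Implicit. Unset Printing Implicit Defensive.
Import GRing.Theory.
Local Open Scope ring_scope.

Section Frob.
Variables (L : fieldType) (n : nat).
Hypothesis Hn : [pchar L].-nat n.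
Definition frobn (H : [pchar L].-nat n) (x : L) := x ^+ n.

Lemma frobn_nmod : nmod_morphism (frobn Hn).
Proof.
split; rewrite /frobn.
  by rewrite expr0n; case/andP: Hn; case: n.
by move=> x y; rewrite exprDn_pchar.
Qed.

Lemma frobn_mon : monoid_morphism (frobn Hn).
Proof. by split; rewrite /frobn ?expr1n // => x y; rewrite exprMn. Qed.

HB.instance Definition _ := GRing.isNmodMorphism.Build L L (frobn Hn) frobn_nmod.
HB.instance Definition _ := GRing.isMonoidMorphism.Build L L (frobn Hn) frobn_mon.
End Frob.

Lemma coef_zero (L : finFieldType) (q h : nat) (d : 'I_h -> L) :
  (1 < q)%N -> #|L| = (q ^ h)%N ->
  (forall y : L, \sum_(l < h) d l * y ^+ (q ^ l)%N = 0) -> forall l, d l = 0.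
Proof.
move=> q1 cardL H l.
pose P : {poly L} := \sum_(l < h) (d l)%:P * 'X^(q ^ l).
have coefP j : P`_j = \sum_(l < h) d l * (j == q ^ l)%N%:R.
  by rewrite coef_sum; apply: eq_bigr => i _; rewrite coefCM coefXn.
have P0 : P = 0.
  apply: (@roots_geq_poly_eq0 _ _ (enum L)).
  - apply/allP => y _; rewrite /root horner_sum.
    rewrite (eq_bigr (fun i => d i * y ^+ (q ^ i))) ?H //.
    by move=> i _; rewrite hornerCM hornerXn.
  - exact: enum_uniq.
  - rewrite -cardE cardL; apply/leq_sizeP => j hj; rewrite coefP.
    apply: big1 => i _.
    have : (q ^ i < q ^ h)%N by rewrite ltn_exp2l.
    by move=> hi; case: eqP => [e|]; [rewrite e leqNgt hi in hj| rewrite mulr0].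
have := coefP (q ^ l)%N; rewrite P0 coef0 (bigD1 l) //= eqxx mulr1 big1 ?addr0.
  by move=> ->.
move=> i ne; rewrite eqn_exp2l //.
have -> : (val l == val i) = false by apply/negbTE; rewrite eq_sym.
by rewrite mulr0.
Qed.

Theorem lemma5p2 (L : finFieldType) (q h : nat) (c : 'I_h -> L)
    (finv : L -> L) (a : L) :
  prime_power q -> (0 < h)%N -> #|L| = (q ^ h)%N ->
  cancel (linpol q c) finv -> cancel finv (linpol q c) ->
  (exists b : L, forall x : L, linpol q c (a * finv x) = b * x) <->
  Fqa_semilinear q a (linpol q c).
Proof.
case=> p [k [pp k0 qE]] h0 cardL fK finvK.
have q1 : (1 < q)%N by rewrite qE -[1%N](expn0 p) ltn_exp2l ?prime_gt1.
have chp : p \in [pchar L] by apply: (@card_finPcharP _ _ (k * h)) => //; rewrite cardL qE expnM.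
have natq l : [pchar L].-nat (q ^ l)%N.
  by rewrite (eq_pnat _ (pcharf_eq chp)) qE -expnM pnatX pnat_id.
have frobE l x : x ^+ (q ^ l)%N = frobn (natq l) x by [].
split.
- move=> [b Hb].
  have Hab y : linpol q c (a * y) = b * linpol q c y by have := Hb (linpol q c y); rewrite fK.
  have Hc l : c l * a ^+ (q ^ l)%N = b * c l.
    apply/eqP; rewrite -subr_eq0; apply/eqP; move: l.
    apply: (coef_zero (d := fun l => c l * a ^+ (q ^ l)%N - b * c l) q1 cardL).
    move=> y; have := Hab y; rewrite /linpol => e.
    rewrite (eq_bigr (fun l => c l * (a * y) ^+ (q ^ l)%N - b * (c l * y ^+ (q ^ l)%N))); last first.
      by move=> i _; rewrite exprMn; ring.
    by rewrite sumrB -mulr_sumr e subrr.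
  have [l0 cl0] : exists l0, c l0 != 0.
    case: (pickP (fun l => c l != 0)) => [l0 H|H]; first by exists l0.
    have f0 x : linpol q c x = 0.
      by rewrite /linpol big1 // => i _; move: (H i) => /negbFE/eqP ->; rewrite mul0r.
    have := fK 1; rewrite f0 -(f0 0) fK => /eqP; by rewrite eq_sym oner_eq0.
  have Hsig : a ^+ (q ^ l0)%N = b.
    by apply: (mulfI cl0); rewrite Hc mulrC.
  pose S (α : L) := forall l, c l != 0 -> α ^+ (q ^ l)%N = α ^+ (q ^ l0)%N.
  have fq (x : L) (hx : x ^+ q = x) l : x ^+ (q ^ l)%N = x.
    by elim: l => [|l IH]; rewrite ?expr1 // expnS exprM hx IH.
  have SF α : in_Fq_adj q a α -> S α.
    apply.
    - split.
      + by move=> l _; rewrite !frobE !rmorph0.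
      + by move=> l _; rewrite !frobE !rmorph1.
      + by move=> x y Sx Sy l cl; rewrite !frobE !rmorphD /= /frobn (Sx l cl) (Sy l cl).
      + by move=> x Sx l cl; rewrite !frobE !rmorphN /= /frobn (Sx l cl).
      split.
      + by move=> x y Sx Sy l cl; rewrite !frobE !rmorphM /= /frobn (Sx l cl) (Sy l cl).
      + by move=> x Sx l cl; rewrite !frobE !fmorphV /= /frobn (Sx l cl).
    - by move=> x hx l _; rewrite !fq.
    - move=> l cl; apply: (mulfI cl); by rewrite Hc Hsig mulrC.
  exists (frobn (natq l0) : {rmorphism L -> L}); split.
    exact: injF_bij (fmorph_inj _).
  move=> al x /SF Sal; rewrite /linpol mulr_sumr; apply: eq_bigr => l _.
  rewrite exprMn; case: (eqVneq (c l) 0) => [->|cl]; first by rewrite !mul0r mulr0.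
  by rewrite (Sal l cl) /frobn mulrCA.
- case=> sigma [_ Hs]; exists (sigma a) => x.
  by rewrite Hs ?finvK // => S _ _.
Qed.
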